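(* Let $N\ge 2$ and let $A=J-I$ be the adjacency matrix of the complete graph $K_N$. For integers $k\ge1$, $m\ge1$ define $$\mathcal A[k,m]=\sum_{\substack{j_1+\cdots+j_k=m\\ j_i\ge1}}\ \prod_{i=1}^k (A^{j_i})_{11}.$$ Then for every $x\in(0,1)$, $$|\mathcal A[k,m]|\le \frac{(N-1)^m}{(N-1-x)^k}\,\frac{x^{2k-m}}{(1-x)^k};$$ in particular $|\mathcal A[k,m]|\le 2^{m-k}\frac{(N-1)^m}{(N-\frac32)^k}$, and, if $m>2k$, $$|\mathcal A[k,m]|\le\frac{(N-1)^m}{\left(N-1-\frac{m-2k}{m-k}\right)^k}\,\frac{(m-k)^{m-k}}{(m-2k)^{m-2k}k^k}.$$
   Context: $(A^{j})_{11}$ is the number of closed walks of length $j$ starting and ending at node $1$. *)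

(* Defs.v *)
From mathcomp Require Import all_boot all_order all_algebra.
Set Implicit Arguments. Unset Strict Implicit. Unset Printing Implicit Defensive.
Import Order.TTheory GRing.Theory Num.Theory.
Local Open Scope ring_scope.

Definition KN (R : pzRingType) (N : nat) : 'M[R]_N := const_mx 1 - 1%:M.

(* A[k,m] = sum over compositions (j_1,...,j_k) of m with all j_i >= 1 of
   prod_i (A^{j_i})_{i0 i0}; i0 plays the role of the vertex "1". *)
Definition Acal (R : pzRingType) (N : nat) (i0 : 'I_N) (k m : nat) : R :=
  \sum_(j : {ffun 'I_k -> 'I_m.+1} |
        [forall i, (0 < j i)%N] && ((\sum_(i < k) (j i : nat))%N == m))
    \prod_(i < k) ((KN R N) ^+ (j i)) i0 i0.

(* Main.v *)
Require Import Defs.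
From mathcomp Require Import all_boot all_order all_algebra ring lra zify.
Set Implicit Arguments. Unset Strict Implicit. Unset Printing Implicit Defensive.
Import Order.TTheory GRing.Theory Num.Theory.
Local Open Scope ring_scope.


Section S.
Variables (R : realFieldType) (N : nat) (i0 : 'I_N).
Let n1 : R := N%:R - 1.
Let a (j : nat) : R := ((KN R N) ^+ j) i0 i0.

Lemma KN_E i j : KN R N i j = 1 - (i == j)%:R.
Proof. by rewrite !mxE. Qed.

Lemma KNrow p : \sum_l KN R N p l = n1.
Proof.
  under eq_bigr do rewrite KN_E.
  rewrite sumrB sumr_const card_ord (bigD1 p) //= big1 ?addr0 ?eqxx //.
  by move=> l /negPf; rewrite eq_sym => ->.
Qed.

Lemma rowsum j i : \sum_l ((KN R N) ^+ j) i l = n1 ^+ j.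
Proof.
elim: j i => [|j IH] i.
  rewrite expr0 (bigD1 i) //= big1 ?addr0; first by rewrite !mxE eqxx.
  by move=> l /negPf; rewrite !mxE eq_sym => ->.
rewrite exprSr.
under eq_bigr do rewrite -mulmxE mxE.
rewrite exchange_big /=.
under eq_bigr do rewrite -mulr_sumr.
under eq_bigr do rewrite KNrow.
by rewrite -mulr_suml IH exprSr.
Qed.

Lemma arec j : a j.+1 = n1 ^+ j - a j.
Proof.
rewrite /a exprSr -mulmxE mxE.
under eq_bigr do rewrite KN_E mulrBr mulr1.
rewrite sumrB rowsum; congr (_ - _).
rewrite (bigD1 i0) //= big1 ?addr0 ?eqxx ?mulr1 //.
by move=> l /negPf ->; rewrite mulr0.
Qed.

Lemma n1_ge1 (hN : (1 < N)%N) : 1 <= n1.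
Proof.
rewrite /n1 lerBrDr -(natrD R 1 1) ler_nat //.
Qed.

Lemma a0 : a 0 = 1.
Proof. by rewrite /a expr0 mxE eqxx. Qed.

Lemma a1 : a 1 = 0.
Proof. by rewrite arec a0 expr0 subrr. Qed.

Lemma abound (hN : (1 < N)%N) j : 0 <= a j.+1 <= n1 ^+ j.
Proof.
have h1 := n1_ge1 hN.
elim: j => [|j /andP[IH1 IH2]]; first by rewrite a1 expr0 lexx ler01.
rewrite arec lerBlDr lerDl IH1 andbT subr_ge0.
apply: (le_trans IH2).
by rewrite exprS ler_peMl // exprn_ge0 // (le_trans ler01).
Qed.

Lemma a_ge0 (hN : (1 < N)%N) j : 0 <= a j.
Proof. by case: j => [|j]; [rewrite a0 ler01 | case/andP: (abound hN j)]. Qed.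

Lemma geomS (x : R) (hx0 : 0 <= x) (hx1 : x < 1) n :
  (1 - x) * \sum_(t < n) (if (2 <= t)%N then x ^+ t else 0) <= x ^+ 2.
Proof.
suff H : (1 - x) * \sum_(t < n) (if (2 <= t)%N then x ^+ t else 0)
          + (if (2 <= n)%N then x ^+ n else x ^+ 2) = x ^+ 2.
  rewrite -[leRHS]H lerDl; by case: ifP => _; rewrite exprn_ge0.
elim: n => [|n IH]; first by rewrite big_ord0 mulr0 add0r.
rewrite big_ord_recr /=.
case: (leqP 2 n) => hn.
  rewrite hn (leq_trans hn (leqnSn n)) in IH *.
  rewrite -IH mulrDr -addrA; congr (_ + _); rewrite exprSr; ring.
rewrite ltnNge in hn. rewrite addr0.
have -> : (if (2 <= n.+1)%N then x ^+ n.+1 else x ^+ 2) = x ^+ 2.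
  by move: hn; case: (n) => [|[|n']].
by rewrite (negPf hn) in IH.
Qed.
Lemma Acal_ge0 (hN : (1 < N)%N) k m : 0 <= Acal R i0 k m.
Proof.
rewrite /Acal; apply: sumr_ge0 => j _; apply: prodr_ge0 => i _; exact: a_ge0.
Qed.

Lemma key (hN : (1 < N)%N) k m (x : R) (hx0 : 0 < x) (hx1 : x < 1) :
  Acal R i0 k m * (x / n1) ^+ m <= (x ^+ 2 / ((1 - x) * n1)) ^+ k.
Proof.
set r := x / n1.
have n1p : 0 < n1 := lt_le_trans ltr01 (n1_ge1 hN).
have r0 : 0 <= r by rewrite divr_ge0 // ltW.
pose c t := if (0 < t)%N then a t * r ^+ t else 0.
have cge0 t : 0 <= c t.
  by rewrite /c; case: ifP => // _; rewrite mulr_ge0 ?a_ge0 ?exprn_ge0.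
have E : Acal R i0 k m * r ^+ m = \sum_(j : {ffun 'I_k -> 'I_m.+1} | [forall i, (0 < j i)%N] && ((\sum_(i < k) (j i : nat))%N == m)) \prod_(i < k) c (j i).
  rewrite /Acal mulr_suml; apply: eq_bigr => j /andP[/forallP hp /eqP hs].
  rewrite (_ : r ^+ m = \prod_(i < k) r ^+ (j i)); last by rewrite prodrXr hs.
  rewrite -big_split /=; apply: eq_bigr => i _.
  by rewrite /c hp.
rewrite E.
apply: (le_trans (y := \sum_(j : {ffun 'I_k -> 'I_m.+1}) \prod_(i < k) c (j i))).
  rewrite [leRHS](bigID (fun j : {ffun 'I_k -> 'I_m.+1} => [forall i, (0 < j i)%N] && ((\sum_(i < k) (j i : nat))%N == m))) /= lerDl.
  by apply: sumr_ge0 => j _; apply: prodr_ge0 => i _.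
rewrite -(bigA_distr_bigA (fun (i : 'I_k) (t : 'I_m.+1) => c t)) /= prodr_const card_ord.
apply: lerXn2r; rewrite ?nnegrE.
- by rewrite sumr_ge0.
- by rewrite divr_ge0 ?exprn_ge0 ?ltW // mulr_gt0 // subr_gt0.
apply: (le_trans (y := (\sum_(t < m.+1) (if (2 <= t)%N then x ^+ t else 0)) / n1)).
  rewrite mulr_suml; apply: ler_sum => t _; rewrite /c.
  case: t => [[|[|s]] hs] /=.
  - by rewrite mul0r.
  - by rewrite a1 !mul0r.
  have := abound hN s.+1 => /andP[_ hb].
  apply: (le_trans (ler_wpM2r (exprn_ge0 _ r0) hb)).
  rewrite /r expr_div_n (exprS n1 s.+1) le_eqVlt; apply/orP; left; apply/eqP.
  field; apply/andP; split; rewrite ?expf_neq0 // gt_eqF //.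
have h1x : 0 < 1 - x by rewrite subr_gt0.
rewrite invfM mulrA; apply: ler_wpM2r; first by rewrite invr_ge0 ltW.
rewrite ler_pdivlMr // mulrC.
exact: geomS (ltW hx0) hx1 _.
Qed.
End S.

Lemma part1 (R : realFieldType) (N : nat) (i0 : 'I_N) (hN : (1 < N)%N) k m (x : R)
  (hx0 : 0 < x) (hx1 : x < 1) :
  Acal R i0 k m <= (N%:R - 1) ^+ m / (N%:R - 1 - x) ^+ k
             * (x ^+ (2 * k) / x ^+ m / (1 - x) ^+ k).
Proof.
have H := @key R N i0 hN k m x hx0 hx1.
have n1g := @n1_ge1 R N hN.
have n1p : 0 < N%:R - 1 :> R by apply: lt_le_trans n1g; exact: ltr01.
have n1x : 0 < N%:R - 1 - x :> R by rewrite subr_gt0; apply: lt_le_trans n1g.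
have h1x : 0 < 1 - x by rewrite subr_gt0.
have xm : 0 < (x / (N%:R - 1)) ^+ m by rewrite exprn_gt0 // divr_gt0.
rewrite -(ler_pdivlMr _ _ xm) in H.
apply: (le_trans H).
rewrite (@expr_div_n _ (x ^+ 2)) -exprM (@exprMn _ _ (1 - x)).
rewrite (@expr_div_n _ x).
have -> : x ^+ (2 * k) / ((1 - x) ^+ k * (N%:R - 1) ^+ k) / (x ^+ m / (N%:R - 1) ^+ m)
   = (N%:R - 1) ^+ m / (N%:R - 1) ^+ k * (x ^+ (2 * k) / x ^+ m / (1 - x) ^+ k).
  field; rewrite ?expf_neq0 ?gt_eqF //.
apply: ler_wpM2r.
  by rewrite !divr_ge0 ?exprn_ge0 // ltW.
apply: ler_wpM2l; first by rewrite exprn_ge0 // ltW.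
rewrite lef_pV2 ?posrE ?exprn_gt0 //.
apply: lerXn2r; rewrite ?nnegrE ?ltW //.
lra.
Qed.

Lemma zpow (R : realFieldType) (x : R) (a b : nat) : x != 0 ->
  x ^ (a%:Z - b%:Z) = x ^+ a / x ^+ b.
Proof. by move=> hx; rewrite expfzDr // -exprnN. Qed.

Lemma alg2 (R : realFieldType) k m :
  (1/2 : R) ^+ (2 * k) / (1/2) ^+ m / (1 - 1/2) ^+ k = 2 ^+ m / 2 ^+ k.
Proof.
have -> : (1 - 1/2 : R) = 1/2 by field.
rewrite !expr_div_n !expr1n mul2n -addnn exprD.
have h2 : (2 : R) != 0 by rewrite pnatr_eq0.
field; rewrite ?expf_neq0 //.
Qed.

Lemma alg3 (R : realFieldType) (p kk : R) e k : 0 < p -> 0 < kk ->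
  (p / (p + kk)) ^+ (2 * k) / (p / (p + kk)) ^+ (e + 2 * k) / (1 - p / (p + kk)) ^+ k
  = (p + kk) ^+ (e + k) / (p ^+ e * kk ^+ k).
Proof.
move=> hp hk.
have hpk : p + kk != 0 by rewrite gt_eqF // addr_gt0.
have -> : 1 - p / (p + kk) = kk / (p + kk) by field.
rewrite !expr_div_n mul2n -addnn !exprD.
field; rewrite ?expf_neq0 ?gt_eqF ?addr_gt0 //.
Qed.

Theorem mainTheorem3 (R : realFieldType) (N : nat) (hN : (1 < N)%N)
    (k m : nat) (hk : (0 < k)%N) (hm : (0 < m)%N) :
  let A := Acal R (Ordinal (ltnW hN)) k m in
  (forall x : R, 0 < x -> x < 1 ->
     `|A| <= (N%:R - 1) ^+ m / (N%:R - 1 - x) ^+ k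
             * (x ^ ((2 * k)%:Z - m%:Z) / (1 - x) ^+ k))
  /\ `|A| <= 2 ^ (m%:Z - k%:Z) * (N%:R - 1) ^+ m / (N%:R - 3 / 2) ^+ k
  /\ ((2 * k < m)%N ->
      `|A| <= (N%:R - 1) ^+ m
               / (N%:R - 1 - (m - 2 * k)%:R / (m - k)%:R) ^+ k
             * ((m - k)%:R ^+ (m - k)
                / ((m - 2 * k)%:R ^+ (m - 2 * k) * k%:R ^+ k))).
Proof.
move=> A.
set i0 := Ordinal (ltnW hN).
have Ae : `|A| = A by rewrite ger0_norm // Acal_ge0.
rewrite Ae /A.
split; [|split].
- move=> x hx0 hx1; rewrite zpow ?gt_eqF //; exact: part1.
- have h2 : (2 : R) != 0 by rewrite pnatr_eq0.
  rewrite zpow //.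
  apply: (le_trans (@part1 R N i0 hN k m (1/2) _ _)); try lra.
  rewrite alg2.
  have -> : (N%:R - 1 - 1/2 : R) = N%:R - 3/2 by field.
  by rewrite le_eqVlt; apply/orP; left; apply/eqP; ring.
move=> hkm.
have hk0 : (0 : R) < k%:R by rewrite ltr0n.
have hp0 : (0 : R) < (m - 2 * k)%:R by rewrite ltr0n subn_gt0.
have hq : (m - k)%:R = (m - 2 * k)%:R + k%:R :> R.
  by rewrite -natrD; congr (_%:R); lia.
have hx0 : (0 : R) < (m - 2 * k)%:R / (m - k)%:R.
  by rewrite hq divr_gt0 // addr_gt0.
have hx1 : (m - 2 * k)%:R / (m - k)%:R < 1 :> R.
  by rewrite hq ltr_pdivrMr ?addr_gt0 // mul1r ltrDl.
apply: (le_trans (@part1 R N i0 hN k m _ hx0 hx1)).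
rewrite le_eqVlt; apply/orP; left; apply/eqP; congr (_ * _).
have e1 : (m - k = (m - 2 * k) + k)%N by lia.
have e2 : m = ((m - 2 * k) + 2 * k)%N by lia.
rewrite hq e1.
set e := (m - 2 * k)%N.
rewrite {1}e2 -/e.
exact: alg3.
Qed.
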